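(* Let $A = [0,\mathfrak{c})$, $B = [0,\omega)$, $Y = A \times B$, $p \notin Y$, and $X = Y \cup A \cup \{p\}$, topologized so that: every point of $Y$ is isolated; each $\alpha \in A$ has basic neighborhoods $\{\alpha\} \cup \{\langle \alpha, m\rangle : m > n\}$, $n \in \omega$; and $p$ has basic neighborhoods $\{p\} \cup \{\langle\alpha,n\rangle : \alpha \in A\setminus F,\ n \in \omega\}$ for countable $F \subset A$. Then $X$ is a Hausdorff star Hurewicz space which is not set star Hurewicz.
   Context: $\mathfrak{c}$ denotes the cardinality of the continuum. For a subset $S$ of a space $X$ and a collection $\mathcal{U}$ of subsets of $X$, ${\rm St}(S,\mathcal{U}) = \bigcup\{U \in \mathcal{U}: U \cap S \neq \emptyset\}$. $X$ is star Hurewicz if for each sequence $(\mathcal{U}_n: n\in\mathbb{N})$ of open covers of $X$ there are finite $\mathcal{V}_n \subset \mathcal{U}_n$ such that each $x\in X$ lies in ${\rm St}(\bigcup\mathcal{V}_n,\mathcal{U}_n)$ for all but finitely many $n$. $X$ is set star Hurewicz if for each nonempty $S \subset X$ and each sequence $(\mathcal{U}_n: n\in\mathbb{N})$ of collections of sets open in $X$ with $\overline{S} \subset \bigcup\mathcal{U}_n$ for all $n$, there are finite $\mathcal{V}_n \subset \mathcal{U}_n$ such that each $x \in S$ lies in ${\rm St}(\bigcup\mathcal{V}_n,\mathcal{U}_n)$ for all but finitely many $n$. *)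

(* Defs.v *)
From HB Require Import structures.
From mathcomp Require Import all_boot all_order.
From mathcomp Require Import boolp classical_sets functions cardinality topology.

Set Implicit Arguments. Unset Strict Implicit. Unset Printing Implicit Defensive.
Local Open Scope classical_set_scope.

Definition St (T : Type) (S : set T) (U : set (set T)) : set T :=
  \bigcup_(W in [set W | U W /\ W `&` S !=set0]) W.

Definition open_cover (T : topologicalType) (U : set (set T)) : Prop :=
  (forall W, U W -> open W) /\ \bigcup_(W in U) W = setT.

Definition star_Hurewicz (T : topologicalType) : Prop :=
  forall Us : nat -> set (set T), (forall n, open_cover (Us n)) ->
  exists Vs : nat -> set (set T),
    (forall n, finite_set (Vs n) /\ Vs n `<=` Us n) /\
    (forall x : T, exists N, forall n, (N <= n)%N ->
        St (\bigcup_(W in Vs n) W) (Us n) x).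

Definition set_star_Hurewicz (T : topologicalType) : Prop :=
  forall (S : set T), S !=set0 ->
  forall Us : nat -> set (set T),
    (forall n, (forall W, Us n W -> open W) /\ closure S `<=` \bigcup_(W in Us n) W) ->
  exists Vs : nat -> set (set T),
    (forall n, finite_set (Vs n) /\ Vs n `<=` Us n) /\
    (forall x : T, S x -> exists N, forall n, (N <= n)%N ->
        St (\bigcup_(W in Vs n) W) (Us n) x).

(* A = [0, c): any set of cardinality continuum; we take set nat (|P(w)| = c). *)
Definition Aset := set nat.

Inductive Xpt : Type :=
  | Ypt : Aset -> nat -> Xpt
  | Apt : Aset -> Xpt
  | Ppt : Xpt.

Definition basicA (a : Aset) (n : nat) : set Xpt :=
  [set x | x = Apt a \/ exists m, (n < m)%N /\ x = Ypt a m].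

Definition basicP (F : set Aset) : set Xpt :=
  [set x | x = Ppt \/ exists a n, ~ F a /\ x = Ypt a n].

Definition Xopen (U : set Xpt) : Prop :=
  forall x, U x ->
    match x with
    | Ypt _ _ => True
    | Apt a => exists n, basicA a n `<=` U
    | Ppt => exists F, countable F /\ basicP F `<=` U
    end.

Lemma XopenT : Xopen setT.
Proof.
case=> [a n|a|] _ //; first by exists 0%N.
by exists set0; split; [exact: countable0|].
Qed.

Lemma XopenI : setI_closed Xopen.
Proof.
move=> U V hU hV [a n|a|] [Ux Vx] //.
- have [n1 h1] := hU _ Ux; have [n2 h2] := hV _ Vx.
  exists (maxn n1 n2) => x [->|[m [lm ->]]]; split.
  + by apply: h1; left.
  + by apply: h2; left.
  + by apply: h1; right; exists m; split => //; apply: leq_ltn_trans lm; exact: leq_maxl.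
  + by apply: h2; right; exists m; split => //; apply: leq_ltn_trans lm; exact: leq_maxr.
- have [F1 [c1 h1]] := hU _ Ux; have [F2 [c2 h2]] := hV _ Vx.
  have cU : countable (F1 `|` F2).
    have -> : F1 `|` F2 = \bigcup_(b in [set: bool]) (if b then F1 else F2).
      apply/seteqP; split => x.
      + by case=> h; [exists true | exists false].
      + by case=> -[] _ h; [left | right].
    apply: bigcup_countable; first exact: countableP.
    by case.
  exists (F1 `|` F2); split; first exact: cU.
  move=> x [->|[a [n [nF ->]]]]; split.
  + by apply: h1; left.
  + by apply: h2; left.
  + by apply: h1; right; exists a, n; split => // ?; apply: nF; left.
  + by apply: h2; right; exists a, n; split => // ?; apply: nF; right.
Qed.

Lemma Xopen_bigU (I : Type) (f : I -> set Xpt) :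
  (forall i, Xopen (f i)) -> Xopen (\bigcup_i f i).
Proof.
move=> hf [a n|a|] [i _ fx] //.
- have [m hm] := hf i _ fx; exists m => y /hm fy; by exists i.
- have [F [cF hF]] := hf i _ fx; exists F; split => // y /hF fy; by exists i.
Qed.

HB.instance Definition _ := gen_eqMixin Xpt.
HB.instance Definition _ := gen_choiceMixin Xpt.
HB.instance Definition _ := isOpenTopological.Build Xpt XopenT XopenI Xopen_bigU.

Definition X : topologicalType := Xpt.

(* Main.v *)
Require Import Defs.
From mathcomp Require Import all_boot all_order.
From mathcomp Require Import boolp classical_sets functions cardinality topology.

Set Implicit Arguments. Unset Strict Implicit. Unset Printing Implicit Defensive.
Local Open Scope classical_set_scope.

Lemma Xnbhs (x : X) (B : set X) : Xopen B -> B x -> nbhs x B.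
Proof. by move=> oB Bx; apply: open_nbhs_nbhs; split. Qed.

Lemma Xopen_open (B : set X) : open B -> Xopen B.
Proof. by []. Qed.

Lemma basicA_open a n : Xopen (basicA a n).
Proof. by move=> x [->|[m [_ ->]]] //; exists n. Qed.

Lemma basicP_open F : countable F -> Xopen (basicP F).
Proof. by move=> cF x [->|[a [m [_ ->]]]] //; exists F; split. Qed.

Lemma single_open a m : Xopen [set Ypt a m].
Proof. by move=> x -> . Qed.

Definition nbh (x y : Xpt) : set Xpt :=
  match x with
  | Ypt a m => [set Ypt a m]
  | Apt a => basicA a (match y with Ypt _ m => m | _ => 0%N end)
  | Ppt => basicP (match y with Ypt b _ => [set b] | Apt b => [set b] | Ppt => set0 end)
  end.

Lemma nbh_open x y : Xopen (nbh x y).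
Proof.
case: x => [a m|a|] /=; [exact: single_open|exact: basicA_open|].
apply: basicP_open; case: y => *; [exact: countable1|exact: countable1|exact: countable0].
Qed.

Lemma nbh_in x y : nbh x y x.
Proof. by case: x => [a m|a|] /=; [|left|left]. Qed.

Lemma nbh_disj x y z : x <> y -> nbh x y z -> nbh y x z -> False.
Proof.
case: x => [a m|a|]; case: y => [b k|b|] //= nxy; rewrite /basicA /basicP /=.
- by move=> -> ?; apply: nxy.
- by move=> -> [//|[j [lj [_ ej]]]]; rewrite ej ltnn in lj.
- by move=> -> [//|[c [j [h [ec _]]]]]; apply: h; rewrite ec.
- move=> [->//|[j [lj ->]]] [_ ej]; by rewrite ej ltnn in lj.
- move=> [->|[j [_ ->]]].
    by move=> [[e]|[j' [_ ?]]] //; apply: nxy; rewrite e.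
  by move=> [//|[j' [_ [e _]]]]; apply: nxy; rewrite e.
- move=> [->|[j [_ ->]]]; first by move=> [//|[c [j' [h ?]]]].
  by move=> [//|[c [j' [h [ec _]]]]]; apply: h; rewrite ec.
- by move=> [->//|[c [j [h ->]]]] [ec _]; apply: h; rewrite ec.
- move=> [->|[c [j [h ->]]]]; first by move=> [//|[j' [_ ?]]].
  by move=> [//|[j' [_ [ec _]]]]; apply: h; rewrite ec.
Qed.

Lemma X_hausdorff : hausdorff_space X.
Proof.
move=> x y hc; apply: contrapT => nxy.
have [z [z1 z2]] := hc _ _ (Xnbhs (@nbh_open x y) (@nbh_in x y))
                        (Xnbhs (@nbh_open y x) (@nbh_in y x)).
exact: (nbh_disj nxy z1 z2).
Qed.

Lemma cantor_setnat : ~ countable [set: set nat].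
Proof.
move=> /countable_injP [f finj].
pose D := [set k | exists B, f B = k /\ ~ B k].
have injf : forall A B, f A = f B -> A = B.
  by move=> A B e; apply: finj => //; rewrite in_setE.
have [h|h] := pselect (D (f D)).
  by have [B [eB nB]] := h; apply: nB; rewrite (injf _ _ eB).
exact: (h (ex_intro _ D (conj erefl h))).
Qed.

Lemma not_ssh : ~ set_star_Hurewicz X.
Proof.
move=> hs.
pose S : set X := [set x | exists a, x = Apt a].
pose Us : nat -> set (set X) := fun n => [set W | exists a, W = basicA a n].
have S0 : S !=set0 by exists (Apt set0); exists set0.
have hU : forall n, (forall W, Us n W -> open W) /\ closure S `<=` \bigcup_(W in Us n) W.
  move=> n; split; first by move=> W [a ->]; exact: basicA_open.
  move=> x cx; case: x cx => [a m|a|] cx.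
  - have [z [[b ->] zb]] := cx _ (Xnbhs (@single_open a m) erefl).
    by [].
  - by exists (basicA a n); [exists a|left].
  - have [z [[b ->] zb]] := cx _ (Xnbhs (basicP_open (countable0 _)) (or_introl erefl)).
    by case: zb => // -[c [j [_ ?]]].
have [Vs [hV hx]] := hs S S0 Us hU.
pose E n := [set a | Vs n (basicA a n)].
have cE : forall n, countable (E n).
  move=> n.
  have inj : {in E n &, injective (fun a => basicA a n)}.
    move=> a b _ _ e.
    have : basicA b n (Apt a) by rewrite -e; left.
    by case=> [[]|[j [_ ?]]].
  rewrite -(eq_countable (inj_card_eq inj)).
  apply: (sub_countable (B := Vs n)); last first.
    exact: finite_set_countable (proj1 (hV n)).
  by apply: subset_card_le => W [a Ea <-].
have cC : countable (\bigcup_(n in [set: nat]) E n).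
  by apply: bigcup_countable => //.
have [a na] : exists a, ~ (\bigcup_(n in [set: nat]) E n) a.
  apply: contrapT => h; apply: cantor_setnat.
  apply: (sub_countable _ cC); apply: subset_card_le => a _.
  by apply: contrapT => na; apply: h; exists a.
have [N hN] := hx (Apt a) (ex_intro _ a erefl).
have := hN N (leqnn N).
rewrite /St; move=> [W [[b eW] [z [Wz [W' VW' W'z]]]] Wa].
have [c eW'] := proj2 (hV N) _ VW'.
subst W W'.
have eb : b = a by case: Wa => [[->]|[j [_ ?]]].
subst b.
have ec : c = a.
  case: Wz => [ez|[j [_ ez]]]; subst z.
    by case: W'z => [[->]|[j [_ ?]]].
  by case: W'z => [//|[j' [_ [-> _]]]].
subst c.
by apply: na; exists N.
Qed.

Definition pt (g : nat -> nat -> Aset) (i k m c : nat) : Xpt :=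
  if c == 0%N then Ppt else if c == 1%N then Apt (g i k) else Ypt (g i k) m.

Lemma X_sh : star_Hurewicz X.
Proof.
move=> Us hU.
have [sel hsel] : exists sel : nat -> X -> set X,
    forall n x, Us n (sel n x) /\ sel n x x.
  have /choice [f hf] : forall nx : nat * X, exists W, Us nx.1 W /\ W nx.2.
    move=> [n x].
    have : (\bigcup_(W in Us n) W) x by rewrite (proj2 (hU n)).
    by case=> W UW Wx; exists W.
  by exists (fun n x => f (n, x)) => n x; exact: (hf (n, x)).
have /choice [F hF] : forall n, exists F : set Aset,
    countable F /\ basicP F `<=` sel n Ppt.
  move=> n.
  exact: (proj1 (hU n) _ (proj1 (hsel n Ppt)) Ppt (proj2 (hsel n Ppt))).
have /choice [g hg] : forall n, exists g : nat -> Aset,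
    forall a, F n a -> exists k, g k = a.
  move=> n.
  have /countable_injP [f finj] := proj1 (hF n).
  have /choice [h hh] : forall k, exists a, (exists b, F n b /\ f b = k) -> F n a /\ f a = k.
    move=> k; have [[b hb]|nb] := pselect (exists b, F n b /\ f b = k).
      by exists b.
    by exists set0 => H; case: nb.
  exists h => a Fa; exists (f a).
  have [Fh eh] := hh (f a) (ex_intro _ a (conj Fa erefl)).
  by apply: finj; rewrite ?in_setE.
pose V n := (fun t : 'I_n.+1 * 'I_n.+1 * 'I_n.+1 * 'I_3 =>
   sel n (pt g t.1.1.1 t.1.1.2 t.1.2 t.2)) @` setT.
have inV : forall n i k m c, (i <= n)%N -> (k <= n)%N -> (m <= n)%N -> (c < 3)%N ->
    V n (sel n (pt g i k m c)).
  move=> n i k m c hi hk hm hc.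
  by exists (Ordinal (n:=n.+1) (m:=i) hi, Ordinal (n:=n.+1) (m:=k) hk,
             Ordinal (n:=n.+1) (m:=m) hm, Ordinal (n:=3) (m:=c) hc).
have VU : forall n W, V n W -> Us n W by move=> n W [t _ <-]; exact: (proj1 (hsel _ _)).
have stV : forall n (x : X) W, V n W -> W x -> St (\bigcup_(W in V n) W) (Us n) x.
  move=> n x W VW Wx; exists W => //; split; first exact: VU.
  by exists x; split => //; exists W.
have P0 : forall n, V n (sel n Ppt) by move=> n; exact: (inV n 0 0 0 0).
exists V; split.
  move=> n; split; last exact: VU.
  exact: finite_image finite_finset.
have notF : forall a, ~ (exists i k, g i k = a) -> forall n m, sel n Ppt (Ypt a m).
  move=> a ng n m; apply: (proj2 (hF n)); right; exists a, m; split => // Fa.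
  by apply: ng; have [k gk] := hg n a Fa; exists n, k.
case=> [a m|a|].
- have [[i [k gik]]|ng] := pselect (exists i k, g i k = a).
    exists (maxn i (maxn k m)) => n hn.
    apply: (stV n _ (sel n (pt g i k m 2))).
      apply: inV => //.
      + exact: leq_trans (leq_maxl _ _) hn.
      + exact: leq_trans (leq_maxl k m) (leq_trans (leq_maxr i _) hn).
      + exact: leq_trans (leq_maxr k m) (leq_trans (leq_maxr i _) hn).
    by have := proj2 (hsel n (pt g i k m 2)); rewrite /pt /= gik.
  by exists 0%N => n _; apply: (stV n _ (sel n Ppt)) => //; apply: notF.
- have [[i [k gik]]|ng] := pselect (exists i k, g i k = a).
    exists (maxn i k) => n hn.
    apply: (stV n _ (sel n (pt g i k 0 1))).
      apply: inV => //.
      + exact: leq_trans (leq_maxl _ _) hn.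
      + exact: leq_trans (leq_maxr _ _) hn.
    by have := proj2 (hsel n (pt g i k 0 1)); rewrite /pt /= gik.
  exists 0%N => n _.
  have [j hj] := proj1 (hU n) _ (proj1 (hsel n (Apt a))) (Apt a) (proj2 (hsel n (Apt a))).
  exists (sel n (Apt a)); last exact: (proj2 (hsel n (Apt a))).
  split; first exact: (proj1 (hsel n (Apt a))).
  exists (Ypt a j.+1); split.
    by apply: hj; right; exists j.+1.
  by exists (sel n Ppt) => //; apply: notF.
- by exists 0%N => n _; apply: (stV n _ (sel n Ppt)) => //; exact: (proj2 (hsel n Ppt)).
Qed.

Theorem mainTheorem15 :
  hausdorff_space X /\ star_Hurewicz X /\ ~ set_star_Hurewicz X.
Proof. by split; [exact: X_hausdorff | split; [exact: X_sh | exact: not_ssh]]. Qed.
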